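(* Let $X,Y$ be compact metric spaces, $\pi_0$ a Borel probability on $X\times Y$ which is positive on nonempty open sets, with $x$-marginal $P_0$, and let $\nu$ be a Borel probability on $X$ with $\operatorname{supp}(\nu)=X$. Suppose there is a continuous $\phi:X\times Y\to\mathbb{R}$ such that $e^{\phi}$ is a $\nu$-Jacobian of $\pi_0$. Then there is a continuous $\psi_0:X\times Y\to\mathbb{R}$ such that $e^{\psi_0}$ is a $P_0$-Jacobian of $\pi_0$, and for every Borel probability $\pi$ on $X\times Y$, \[IG(\pi,\pi_0):=-\int\psi_0\,d\pi-H^{P_0}(\pi)\;=\;-\int\phi\,d\pi-H^{\nu}(\pi).\]
   Context: For a probability $\rho$ on $X$, a measurable $J:X\times Y\to[0,\infty)$ is a $\rho$-Jacobian of a probability $\pi$ on $X\times Y$ with $y$-marginal $Q$ if $\int J(x,y)\,d\rho(x)=1$ for every $y$ and $\int\!\int g(x,y)J(x,y)\,d\rho(x)\,dQ(y)=\int g\,d\pi$ for every bounded measurable $g$. $\mathcal{F}(\pi)$ is the set of measurable functions whose $\pi$-integral is well defined (not $+\infty-\infty$), and $H^{\rho}(\pi)=-\sup\{\int c\,d\pi:\ c\in\mathcal{F}(\pi),\ \int e^{c(x,y)}\,d\rho(x)=1\ \forall y\in Y\}$. *)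

(* Defs.v *)
From HB Require Import structures.
From mathcomp Require Import all_boot all_order all_algebra.
From mathcomp Require Import all_classical all_reals all_analysis.
Set Implicit Arguments.
Unset Strict Implicit.
Unset Printing Implicit Defensive.
Import Order.TTheory GRing.Theory Num.Theory.
Import numFieldNormedType.Exports.
Local Open Scope classical_set_scope.
Local Open Scope ring_scope.

(* A pointed copy of a (nonempty) topological space, needed because
   measurable types in MathComp-Analysis must be pointed. *)
Definition ptd (T : Type) (x0 : T) : Type := T.
HB.instance Definition _ (T : topologicalType) (x0 : T) :=
  Topological.on (ptd x0).
HB.instance Definition _ (T : topologicalType) (x0 : T) :=
  isPointed.Build (ptd x0) x0.

Definition borel (T : topologicalType) (x0 : T) :=
  g_sigma_algebraType (@open (ptd x0)).

Definition msupport (T : topologicalType) (R : realType)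
  (mu : set T -> \bar R) : set T :=
  [set x | forall U : set T, open U -> U x -> (0 < mu U)%E].

Section jacobian.
Context {R : realType} {d1 d2 : measure_display}
  {X : measurableType d1} {Y : measurableType d2}.

Definition xmarg (pi : set (X * Y) -> \bar R) : set X -> \bar R :=
  pushforward pi fst.
Definition ymarg (pi : set (X * Y) -> \bar R) : set Y -> \bar R :=
  pushforward pi snd.

Definition is_jacobian (rho : set X -> \bar R) (pi : set (X * Y) -> \bar R)
  (J : X * Y -> R) : Prop :=
  [/\ measurable_fun setT J,
      (forall z, 0 <= J z),
      (forall y : Y, (\int[rho]_x (J (x, y))%:E = 1)%E) &
      (forall g : X * Y -> R, measurable_fun setT g ->
         [bounded g z | z in [set: X * Y]] ->
         (\int[ymarg pi]_y \int[rho]_x (g (x, y) * J (x, y))%:E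
            = \int[pi]_z (g z)%:E)%E)].

Definition wdef_int (pi : set (X * Y) -> \bar R) (c : X * Y -> R) : Prop :=
  ~ ((\int[pi]_z funepos (fun z => (c z)%:E) z = +oo)%E /\
     (\int[pi]_z funeneg (fun z => (c z)%:E) z = +oo)%E).

Definition Fset (pi : set (X * Y) -> \bar R) : set (X * Y -> R) :=
  [set c | measurable_fun setT c /\ wdef_int pi c].

Definition Hrel (rho : set X -> \bar R) (pi : set (X * Y) -> \bar R) : \bar R :=
  (- ereal_sup [set (\int[pi]_z (c z)%:E)%E | c in
      [set c | Fset pi c /\
               forall y : Y, (\int[rho]_x (expR (c (x, y)))%:E = 1)%E]])%E.

End jacobian.

(* Main.v *)
Require Import Defs.
From HB Require Import structures.
From mathcomp Require Import all_boot all_order all_algebra.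
From mathcomp Require Import all_classical all_reals all_analysis.
From mathcomp Require Import measurable_realfun.
From mathcomp Require Import lra.
Import Order.TTheory GRing.Theory Num.Theory.
Import numFieldNormedType.Exports.
Local Open Scope classical_set_scope.
Local Open Scope ring_scope.
Set Implicit Arguments.
Unset Strict Implicit.


Section marg.
Context {R : realType} {d1 d2 : measure_display}
  {X : measurableType d1} {Y : measurableType d2}.
Variable pi : probability (X * Y)%type R.
Local Open Scope ereal_scope.

Let xm0 : xmarg pi set0 = 0.
Proof. by rewrite /xmarg /pushforward preimage_set0 measure0. Qed.
Let xm_ge0 A : 0 <= xmarg pi A.
Proof. by apply: measure_ge0. Qed.
Let xm_sa : semi_sigma_additive (xmarg pi).
Proof.
move=> F mF tF mUF; rewrite /xmarg /pushforward preimage_bigcup.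
apply: measure_semi_sigma_additive.
- by move=> n; rewrite -[X in measurable X]setTI; exact: measurable_fst.
- apply/trivIsetP => /= i j _ _ ij; rewrite -preimage_setI.
  by move/trivIsetP : tF => /(_ _ _ _ _ ij) ->//; rewrite preimage_set0.
- by rewrite -preimage_bigcup -[X in measurable X]setTI; exact: measurable_fst.
Qed.
HB.instance Definition _ := isMeasure.Build _ _ _ (xmarg pi) xm0 xm_ge0 xm_sa.
Let xm1 : xmarg pi setT = 1.
Proof. by rewrite /xmarg /pushforward preimage_setT probability_setT. Qed.
HB.instance Definition _ := Measure_isProbability.Build _ _ _ (xmarg pi) xm1.

Let ym0 : ymarg pi set0 = 0.
Proof. by rewrite /ymarg /pushforward preimage_set0 measure0. Qed.
Let ym_ge0 A : 0 <= ymarg pi A.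
Proof. by apply: measure_ge0. Qed.
Let ym_sa : semi_sigma_additive (ymarg pi).
Proof.
move=> F mF tF mUF; rewrite /ymarg /pushforward preimage_bigcup.
apply: measure_semi_sigma_additive.
- by move=> n; rewrite -[X in measurable X]setTI; exact: measurable_snd.
- apply/trivIsetP => /= i j _ _ ij; rewrite -preimage_setI.
  by move/trivIsetP : tF => /(_ _ _ _ _ ij) ->//; rewrite preimage_set0.
- by rewrite -preimage_bigcup -[X in measurable X]setTI; exact: measurable_snd.
Qed.
HB.instance Definition _ := isMeasure.Build _ _ _ (ymarg pi) ym0 ym_ge0 ym_sa.
Let ym1 : ymarg pi setT = 1.
Proof. by rewrite /ymarg /pushforward preimage_setT probability_setT. Qed.
HB.instance Definition _ := Measure_isProbability.Build _ _ _ (ymarg pi) ym1.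
End marg.



Section cov.
Context d (T : measurableType d) (R : realType).
Variables (mu nu : {measure set T -> \bar R}) (g : T -> R).
Hypothesis g0 : forall x, 0 <= g x.
Hypothesis mg : measurable_fun setT g.
Hypothesis nug : forall A, measurable A -> nu A = (\int[mu]_(x in A) (g x)%:E)%E.
Local Open Scope ereal_scope.
Import HBNNSimple.

Lemma cov_ge0 (f : T -> \bar R) E : (forall x, 0 <= f x) ->
    measurable E -> measurable_fun E f ->
  \int[mu]_(x in E) (f x * (g x)%:E) = \int[nu]_(x in E) f x.
Proof.
move=> f0 mE mf; set G := fun x => (g x)%:E.
have Gge0 x : 0 <= G x by rewrite lee_fin.
have mG : measurable_fun E G by apply/measurable_EFinP/measurable_funTS.
pose h := nnsfun_approx mE mf.
have -> : \int[nu]_(x in E) f x =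
    lim (\int[nu]_(x in E) (EFin \o h n) x @[n --> \oo]).
  have fE x : E x -> f x = lim ((EFin \o h n) x @[n --> \oo]).
    by move=> Ex; apply/esym/cvg_lim => //; exact: cvg_nnsfun_approx.
  under eq_integral => x /[!inE] /fE -> //.
  apply: monotone_convergence => //.
  - move=> n; apply/measurable_EFinP.
    by apply: (measurable_funS measurableT) => //; exact/measurable_funP.
  - by move=> n x Ex //=; rewrite lee_fin.
  - by move=> x Ex a b ab; rewrite lee_fin; exact/lefP/nd_nnsfun_approx.
have -> : \int[mu]_(x in E) (f x * G x) =
    lim (\int[mu]_(x in E) ((EFin \o h n) \* G) x @[n --> \oo]).
  have fg x : E x -> f x * G x = lim (((EFin \o h n) \* G) x @[n --> \oo]).
    by move=> Ex; apply/esym/cvg_lim => //; apply: cvgeZr;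
      [by []|exact: cvg_nnsfun_approx].
  under eq_integral => x /[!inE] /fg -> //.
  apply: monotone_convergence => [//| | |].
  - move=> n; apply/emeasurable_funM => //; apply/measurable_funTS.
      exact/measurable_EFinP.
  - by move=> n x Ex /=; rewrite mule_ge0 ?lee_fin.
  - by move=> x Ex a b ab/=; rewrite lee_wpmul2r ?lee_fin//; exact/lefP/nd_nnsfun_approx.
suff suf n : \int[mu]_(x in E) ((EFin \o h n) x * G x) =
    \int[nu]_(x in E) (EFin \o h n) x.
  by under eq_fun do rewrite suf.
transitivity (\int[nu]_(x in E)
   (\sum_(y \in range (h n)) (y * \1_(h n @^-1` [set y]) x)%:E)); last first.
  by apply: eq_integral => t tE; rewrite /= fimfunE -fsumEFin.
have indich m r : measurable_fun E (fun x => (r * \1_(h m @^-1` [set r]) x)%:E).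
  by apply: (measurable_comp measurableT) => //; exact: measurable_funM.
rewrite ge0_integral_fsum//; last by move=> m y Ey; exact: nnfun_muleindic_ge0.
transitivity (\int[mu]_(x in E) (\sum_(y \in range (h n))
    (y * \1_(h n @^-1` [set y]) x)%:E * G x)).
  under [RHS]eq_integral => x xE.
    rewrite -ge0_mule_fsuml => [|y]; last exact: nnfun_muleindic_ge0.
    rewrite fsumEFin // -(fimfunE _ x); over.
  by [].
rewrite ge0_integral_fsum//; last 2 first.
  - move=> y; apply: emeasurable_funM => //.
  - by move=> m y Ey; rewrite mule_ge0 ?nnfun_muleindic_ge0.
apply: eq_fsbigr => r rhn.
under [RHS]eq_integral do rewrite EFinM.
rewrite integralZl_indic_nnsfun => //.
under eq_integral do rewrite EFinM -muleA.
rewrite ge0_integralZl//.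
- under eq_integral do rewrite muleC.
  rewrite (eq_integral (G \_ (h n @^-1` [set r]))); last first.
    by move=> x xE; rewrite epatch_indic.
  rewrite -integral_mkcondr -nug//.
  all: try by rewrite integral_indic// setIC.
  all: try by (apply: measurableI => //; exact: measurable_sfunP).
- apply: emeasurable_funM; first exact/measurable_EFinP.
  exact: mG.
- by move=> t Et; rewrite mule_ge0 ?lee_fin.
- by move: rhn; rewrite inE => -[t _ <-]; rewrite lee_fin.
Qed.
End cov.

Section cov2.
Context d (T : measurableType d) (R : realType).
Variables (mu nu : {measure set T -> \bar R}) (g : T -> R).
Hypothesis g0 : forall x, 0 <= g x.
Hypothesis mg : measurable_fun setT g.
Hypothesis nug : forall A, measurable A -> nu A = (\int[mu]_(x in A) (g x)%:E)%E.
Local Open Scope ereal_scope.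

Lemma cov_all (f : T -> \bar R) :
  measurable_fun setT f ->
  \int[nu]_x f x = \int[mu]_x (f x * (g x)%:E).
Proof.
move=> mf.
rewrite integralE [in RHS]integralE.
have Hp : (fun x => f x * (g x)%:E)^\+ = (fun x => f^\+ x * (g x)%:E).
  by apply/funext => x; rewrite !funeposE [RHS]muleC maxe_pMr ?lee_fin// mule0 muleC.
have Hn : (fun x => f x * (g x)%:E)^\- = (fun x => f^\- x * (g x)%:E).
  by apply/funext => x; rewrite !funenegE -mulNe [RHS]muleC maxe_pMr ?lee_fin// mule0 muleC.
rewrite Hp Hn.
rewrite -(cov_ge0 g0 mg nug) //; last exact: measurable_funepos.
rewrite -(cov_ge0 g0 mg nug) //; last exact: measurable_funeneg.
Qed.
End cov2.


Lemma maxshift (R : realDomainType) (a l K : R) : `|l| <= K ->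
  Num.max (a + l) 0 <= Num.max a 0 + K.
Proof.
move=> lK; have K0 : 0 <= K by apply: le_trans lK.
rewrite ge_max; apply/andP; split.
  apply: lerD; first by rewrite le_max lexx.
  by apply: le_trans lK; exact: ler_norm.
by apply: addr_ge0 => //; rewrite le_max lexx orbT.
Qed.

Section shift.
Context d (T : measurableType d) (R : realType).
Variable pi : probability T R.
Local Open Scope ereal_scope.

Lemma pT : (pi : {measure set T -> \bar R}) setT = 1.
Proof. exact: probability_setT. Qed.

Lemma pos_shift (f g : T -> R) (K : R) :
  measurable_fun setT f -> measurable_fun setT g ->
  (forall z, `|f z - g z| <= K)%R ->
  \int[pi]_z ((fun z => (f z)%:E)^\+ z) <=
  \int[pi]_z ((fun z => (g z)%:E)^\+ z) + K%:E.
Proof.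
move=> mf mg hK.
have K0 : (0 <= K)%R by apply: le_trans (hK point); exact: normr_ge0.
have -> : K%:E = \int[pi]_z (cst K%:E z).
  rewrite integral_cst//; apply: (eq_trans _ (congr1 (fun x => K%:E * x) (esym (probability_setT pi)))); by rewrite mule1.
rewrite -ge0_integralD//; last by apply: measurable_funepos; exact/measurable_EFinP.
apply: ge0_le_integral => //.
- by apply: measurable_funepos; exact/measurable_EFinP.
- apply: emeasurable_funD => //.
  by apply: measurable_funepos; exact/measurable_EFinP.
move=> z _; rewrite !funeposE /= -!EFin_max -EFinD lee_fin.
have -> : f z = (g z + (f z - g z))%R by rewrite addrC subrK.
exact: maxshift.
Qed.

Lemma neg_shift (f g : T -> R) (K : R) :
  measurable_fun setT f -> measurable_fun setT g ->
  (forall z, `|f z - g z| <= K)%R ->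
  \int[pi]_z ((fun z => (f z)%:E)^\- z) <=
  \int[pi]_z ((fun z => (g z)%:E)^\- z) + K%:E.
Proof.
move=> mf mg hK.
have K0 : (0 <= K)%R by apply: le_trans (hK point); exact: normr_ge0.
have -> : K%:E = \int[pi]_z (cst K%:E z).
  rewrite integral_cst//; apply: (eq_trans _ (congr1 (fun x => K%:E * x) (esym (probability_setT pi)))); by rewrite mule1.
rewrite -ge0_integralD//; last by apply: measurable_funeneg; exact/measurable_EFinP.
apply: ge0_le_integral => //.
- by apply: measurable_funeneg; exact/measurable_EFinP.
- apply: emeasurable_funD => //.
  by apply: measurable_funeneg; exact/measurable_EFinP.
move=> z _; rewrite !funenegE /= -!EFin_max -EFinD lee_fin.
have -> : (- f z = - g z + (g z - f z))%R by rewrite addrA addNr add0r.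
apply: maxshift; by rewrite distrC.
Qed.

Lemma bounded_int (L : T -> R) (K : R) : measurable_fun setT L ->
  (forall z, `|L z| <= K)%R -> pi.-integrable setT (fun z => (L z)%:E).
Proof.
move=> mL hK; apply: (measurable_bounded_integrable (f := L)) => //.
  by rewrite pT ltry.
exists K; split; first by rewrite num_real.
by move=> M KM z _; apply: le_trans (hK z) (ltW KM).
Qed.

Lemma lt_shift (a b : \bar R) (k : R) : a <= b + k%:E -> b < +oo -> a < +oo.
Proof. by move=> ab bo; apply: le_lt_trans ab _; rewrite lte_add_pinfty// ltry. Qed.

Lemma shift_wdef (c L : T -> R) (K : R) :
  measurable_fun setT c -> measurable_fun setT L ->
  (forall z, `|L z| <= K)%R ->
  ~ (\int[pi]_z ((fun z => (c z)%:E)^\+ z) = +oo /\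
     \int[pi]_z ((fun z => (c z)%:E)^\- z) = +oo) ->
  ~ (\int[pi]_z ((fun z => (c z + L z)%:E)^\+ z) = +oo /\
     \int[pi]_z ((fun z => (c z + L z)%:E)^\- z) = +oo) /\
  \int[pi]_z (c z + L z)%:E = \int[pi]_z (c z)%:E + \int[pi]_z (L z)%:E.
Proof.
move=> mc mL hK wd.
have mcL : measurable_fun setT (fun z => c z + L z)%R by exact: measurable_funD.
have d1 z : (`|(c z + L z) - c z| <= K)%R by rewrite addrC addKr.
have d2 z : (`|c z - (c z + L z)| <= K)%R by rewrite distrC addrC addKr.
have P1 := pos_shift mcL mc d1.
have P2 := pos_shift mc mcL d2.
have N1 := neg_shift mcL mc d1.
have N2 := neg_shift mc mcL d2.
have iL := bounded_int mL hK.
have fL := integrable_fin_num measurableT iL.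
set Cp := \int[pi]_z ((fun z => (c z)%:E)^\+ z) in wd P1 P2.
set Cn := \int[pi]_z ((fun z => (c z)%:E)^\- z) in wd N1 N2.
set Dp := \int[pi]_z ((fun z => (c z + L z)%:E)^\+ z) in P1 P2 *.
set Dn := \int[pi]_z ((fun z => (c z + L z)%:E)^\- z) in N1 N2 *.
have Cp0 : 0 <= Cp by apply: integral_ge0.
have Cn0 : 0 <= Cn by apply: integral_ge0.
have Dp0 : 0 <= Dp by apply: integral_ge0.
have Dn0 : 0 <= Dn by apply: integral_ge0.
split.
  move=> [Dpy Dny]; apply: wd; split.
    by apply/eqP/negPn; rewrite -ltey; apply/negP => /(lt_shift P1); rewrite Dpy ltxx.
  by apply/eqP/negPn; rewrite -ltey; apply/negP => /(lt_shift N1); rewrite Dny ltxx.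
have EC : \int[pi]_z (c z)%:E = Cp - Cn by rewrite integralE.
have ED : \int[pi]_z (c z + L z)%:E = Dp - Dn by rewrite integralE.
have [Cpy|Cpf] := eqVneq Cp +oo.
  have Cnf : Cn < +oo by rewrite ltey; apply/negP => /eqP Cny; exact: wd.
  have Dpy : Dp = +oo.
    by apply/eqP/negPn; rewrite -ltey; apply/negP => /(lt_shift P2); rewrite Cpy ltxx.
  have Dnf : Dn < +oo by exact: lt_shift N1 Cnf.
  rewrite EC ED Cpy Dpy !addye //.
  - by move: fL; rewrite fin_numE => /andP[].
  - by rewrite eqe_oppLR /= -ltey.
  - by rewrite eqe_oppLR /= -ltey.
have Cpf' : Cp < +oo by rewrite ltey.
have [Cny|Cnf] := eqVneq Cn +oo.
  have Dny : Dn = +oo.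
    by apply/eqP/negPn; rewrite -ltey; apply/negP => /(lt_shift N2); rewrite Cny ltxx.
  by rewrite EC ED Cny Dny !addeNy.
have Cnf' : Cn < +oo by rewrite ltey.
have iC : pi.-integrable setT (fun z => (c z)%:E).
  apply/integrableP; split; first exact/measurable_EFinP.
  have -> : \int[pi]_z `|(c z)%:E| = Cp + Cn.
    rewrite -ge0_integralD//; last 2 first.
    - by apply: measurable_funepos; exact/measurable_EFinP.
    - by apply: measurable_funeneg; exact/measurable_EFinP.
    apply: eq_integral => z _.
    by have := fune_abse (fun z => (c z)%:E) => /(congr1 (fun F => F z)).
  exact: lte_add_pinfty.
under eq_integral do rewrite EFinD.
by rewrite integralD.
Qed.
End shift.

Section s4.
Local Open Scope ereal_scope.

Lemma ereal_sup_shift_le (R : realType) (S : set (\bar R)) (k : R) :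
  ereal_sup [set x + k%:E | x in S] <= ereal_sup S + k%:E.
Proof.
apply: ge_ereal_sup => _ [x Sx <-]; rewrite leeD2r//.
exact: ereal_sup_ubound.
Qed.

Lemma ereal_sup_shift (R : realType) (S : set (\bar R)) (k : R) :
  ereal_sup [set x + k%:E | x in S] = ereal_sup S + k%:E.
Proof.
apply/eqP; rewrite eq_le ereal_sup_shift_le/=.
set S' := [set x + k%:E | x in S].
have HS : S = [set y + (- k)%:E | y in S'].
  apply/seteqP; split => [x Sx|_ [_ [x Sx <-] <-]].
    by exists (x + k%:E); [exists x|rewrite EFinN addeK].
  by rewrite EFinN addeK.
apply: (@le_trans _ _ (ereal_sup [set y + (-k)%:E | y in S'] + k%:E)).
  by rewrite -HS.
apply: le_trans (leeD2r _ (ereal_sup_shift_le S' (-k))) _.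
by rewrite EFinN subeK.
Qed.

End s4.


Lemma unif_sec (R : realType) (X Y : topologicalType) (E : X * Y -> R)
  (cE : continuous E) (cY : compact [set: Y]) (x : X) (e : R) :
  0 < e -> \forall x' \near x, forall y, `|E (x', y) - E (x, y)| < e.
Proof.
move=> e0.
have := (compact_near_coveringP [set: Y]).1 cY X (nbhs x)
  (fun x' y => `|E (x', y) - E (x, y)| < e) _.
have H : forall y, [set: Y] y -> \forall y' \near y & x' \near x,
    `|E (x', y') - E (x, y')| < e.
  move=> y _.
  have e20 : 0 < e / 2 by rewrite divr_gt0.
  have := cvgr_dist_lt _ _ (cE (x, y)) _ e20.
  move=> [[A B] /= [nA nB] AB].
  exists (B, A) => //= -[y' x'] /= [By' Ax'].
  rewrite (splitr e); apply: le_lt_trans (ler_distD (E (x, y)) _ _) _.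
  apply: ltrD; first by rewrite distrC; exact: (AB (x', y')).
  by apply: (AB (x, y')); split => //; exact: nbhs_singleton.
move=> /(_ _ H); apply: filterS => x' Hx' y; exact: Hx'.
Qed.


Section main.
Variables (R : realType) (X Y : metricType R) (x0 : X) (y0 : Y).
Hypotheses (cX : compact [set: X]) (cY : compact [set: Y]).
Variable pi0 : probability (borel x0 * borel y0)%type R.
Variable nu : probability (borel x0) R.
Variable phi : X * Y -> R.
Hypothesis hphi : continuous phi.
Hypothesis hJ : is_jacobian nu pi0 (fun z => expR (phi z)).

Local Notation TX := (borel x0).
Local Notation TY := (borel y0).
Local Notation Q := (ymarg pi0).
Local Notation P0 := (xmarg pi0).

Lemma phi_bnd : exists M : R, forall z, `|phi z| <= M.
Proof.
have cXY : compact [set: X * Y] by rewrite -setXTT; exact: compact_setX.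
have := continuous_compact (continuous_subspaceT hphi) cXY.
move=> /compact_bounded [M [_ HM]].
exists (M + 1) => z; apply: (HM (M + 1)); first by rewrite ltrDl.
by exists z.
Qed.

Lemma mE : measurable_fun [set: (TX * TY)%type] (fun z => expR (phi z)).
Proof. by case: hJ. Qed.

Lemma mphi : measurable_fun [set: (TX * TY)%type] phi.
Proof.
have -> : phi = (fun z => ln (expR (phi z))) by apply/funext => z; rewrite expRK.
apply: measurableT_comp; [exact: measurable_ln|exact: mE].
Qed.

Lemma E1 (y : TY) : (\int[nu]_x (expR (phi (x, y)))%:E = 1)%E.
Proof. by case: hJ. Qed.

Lemma E4 (g : TX * TY -> R) : measurable_fun setT g ->
  [bounded g z | z in [set: (TX * TY)%type]] ->
  (\int[Q]_y \int[nu]_x (g (x, y) * expR (phi (x, y)))%:E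
            = \int[pi0]_z (g z)%:E)%E.
Proof. by case: hJ => _ _ _; apply. Qed.


Let M : R := sval (cid phi_bnd).
Let HM : forall z, `|phi z| <= M := svalP (cid phi_bnd).

Lemma Elo z : expR (- M) <= expR (phi z).
Proof. by rewrite ler_expR; have := HM z; rewrite ler_norml => /andP[]. Qed.
Lemma Ehi z : expR (phi z) <= expR M.
Proof. by rewrite ler_expR; have := HM z; rewrite ler_norml => /andP[]. Qed.
Lemma Enorm z : `|expR (phi z)| <= expR M.
Proof. by rewrite ger0_norm ?expR_ge0 // Ehi. Qed.

Lemma msec (x : TX) : measurable_fun [set: TY] (fun y => expR (phi (x, y))).
Proof. exact: (measurable_fun_pair2 x mE). Qed.

Lemma isec (x : TX) : Q.-integrable [set: TY] (EFin \o (fun y => expR (phi (x, y)))).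
Proof. exact: (bounded_int Q (msec x) (fun y => Enorm (x, y))). Qed.

Definition h (x : X) : R := (\int[Q]_y expR (phi (x, y))).

Lemma hE (x : TX) : ((h x)%:E = \int[Q]_y (expR (phi (x, y)))%:E)%E.
Proof. by rewrite /h /Rintegral fineK //; exact: (integrable_fin_num measurableT (isec x)). Qed.

Lemma QT : fine ((Q : {measure set TY -> \bar R}) setT) = 1.
Proof. by rewrite pT. Qed.

Lemma h_lo x : expR (- M) <= h x.
Proof.
apply: (@le_trans _ _ (\int[Q]_(y in [set: TY]) expR (- M))).
  by rewrite Rintegral_cst // QT mulr1.
apply: le_Rintegral => //; last by move=> y _; exact: Elo.
  by apply: (bounded_int Q (K := expR (- M))) => // y; rewrite ger0_norm ?expR_ge0.
exact: isec.
Qed.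

Lemma h_hi x : h x <= expR M.
Proof.
apply: (@le_trans _ _ (\int[Q]_(y in [set: TY]) expR M)); last first.
  by rewrite Rintegral_cst // QT mulr1.
apply: le_Rintegral => //; last by move=> y _; exact: Ehi.
  exact: isec.
by apply: (bounded_int Q (K := expR M)) => // y; rewrite ger0_norm ?expR_ge0.
Qed.

Lemma h_gt0 x : 0 < h x.
Proof. exact: lt_le_trans (expR_gt0 _) (h_lo x). Qed.


Lemma cE : continuous (fun z : X * Y => expR (phi z)).
Proof. by move=> z; apply: continuous_comp; [exact: hphi|exact: continuous_expR]. Qed.

Lemma hcont : continuous h.
Proof.
move=> x; apply/cvgrPdist_le => e e0.
have U := unif_sec cE cY x e0.
near=> x'.
have Ux : forall y, `|expR (phi (x', y)) - expR (phi (x, y))| < e by near: x'.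
rewrite /h -RintegralB//; [|exact: isec|exact: isec].
have mD : measurable_fun [set: TY]
    (fun y => expR (phi (x, y)) - expR (phi (x', y))).
  by apply: measurable_funB; exact: msec.
apply: le_trans (le_normr_Rintegral _ _) _ => //.
  apply: (bounded_int Q (K := expR M + expR M)) => // y.
  by apply: le_trans (ler_normB _ _) _; apply: lerD; exact: Enorm.
apply: (@le_trans _ _ (\int[Q]_(y in [set: TY]) e)); last first.
  by rewrite Rintegral_cst // QT mulr1.
apply: le_Rintegral => //.
- apply: (bounded_int Q (K := expR M + expR M)).
  + by apply: measurableT_comp => //.
  + move=> y; rewrite normr_id.
    by apply: le_trans (ler_normB _ _) _; apply: lerD; exact: Enorm.
- by apply: (bounded_int Q (K := e)) => // y; rewrite ger0_norm// ltW.
- by move=> y _; rewrite distrC; apply: ltW.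
Unshelve. all: end_near.
Qed.

Lemma mh : measurable_fun [set: TX] h.
Proof.
apply: (measurability (@RGenOInfty.G R)).
  exact: RGenOInfty.measurableE.
move=> _ [_ [a ->] <-].
rewrite setTI; apply: sub_sigma_algebra.
by apply: open_comp => //; move=> z _; exact: hcont.
Qed.


Lemma dens (A : set TX) : measurable A ->
  P0 A = (\int[nu]_(x in A) (h x)%:E)%E.
Proof.
move=> mA.
have mA' : measurable (fst @^-1` A : set (TX * TY)).
  by rewrite -[X in measurable X]setTI; exact: measurable_fst.
pose g := fun z : (TX * TY)%type => \1_(fst @^-1` A) z : R.
have mg : measurable_fun setT g by exact: measurable_indic.
have S1 : P0 A = (\int[pi0]_z (g z)%:E)%E.
  by rewrite integral_indic// setIT.
rewrite S1 -E4 //; last first.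
  exists 1; split; first by rewrite num_real.
  move=> K K1 z _; apply: le_trans (ltW K1).
  by rewrite /g indicE; case: (_ \in _); rewrite ?normr1 ?normr0.
have mF : measurable_fun setT (fun z : (TX * TY)%type => (g z * expR (phi z))%:E).
  by apply/measurable_EFinP; apply: measurable_funM => //; exact: mE.
rewrite -(fubini_tonelli _ mF); last first.
  by move=> z; rewrite lee_fin mulr_ge0 ?expR_ge0 // /g indicE.
rewrite [RHS]integral_mkcond; apply: eq_integral => x _.
have gx y : g (x, y) = \1_A x by [].
under eq_integral do rewrite gx EFinM.
rewrite ge0_integralZl //; last by apply/measurable_EFinP; exact: msec.
rewrite -hE patchE indicE; case: (x \in A); first by rewrite mul1e.
by rewrite mul0e.
Qed.


Lemma h_ge0 (x : TX) : 0 <= h x.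
Proof. exact: ltW (h_gt0 x). Qed.

Lemma covP (f : TX -> \bar R) : measurable_fun setT f ->
  (\int[P0]_x f x = \int[nu]_x (f x * (h x)%:E))%E.
Proof. exact: (cov_all h_ge0 mh dens). Qed.

Definition psi0 (z : X * Y) : R := phi z - ln (h z.1).

Lemma psi0_cont : continuous psi0.
Proof.
move=> z; apply: cvgB; first exact: hphi.
apply: continuous_comp; last exact: continuous_ln (h_gt0 _).
apply: continuous_comp; last exact: hcont.
exact: cvg_fst.
Qed.

Lemma mL : measurable_fun [set: (TX * TY)%type] (fun z => ln (h z.1)).
Proof.
apply: measurableT_comp; first exact: measurable_ln.
apply: measurableT_comp; first exact: mh.
exact: measurable_fst.
Qed.

Lemma mpsi0 : measurable_fun [set: (TX * TY)%type] psi0.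
Proof. by apply: measurable_funB; [exact: mphi|exact: mL]. Qed.

Lemma exp_psi0 z : expR (psi0 z) * h z.1 = expR (phi z).
Proof.
rewrite /psi0 expRB lnK ?posrE ?h_gt0 //.
by rewrite divfK // gt_eqF // h_gt0.
Qed.

Lemma jac0 : is_jacobian P0 pi0 (fun z => expR (psi0 z)).
Proof.
split.
- by apply: measurableT_comp; [exact: measurable_expR|exact: mpsi0].
- by move=> z; exact: expR_ge0.
- move=> y; rewrite covP; last first.
    apply/measurable_EFinP; apply: measurableT_comp; first exact: measurable_expR.
    exact: (measurable_fun_pair1 y mpsi0).
  rewrite -(E1 y); apply: eq_integral => x _.
  by rewrite -EFinM (exp_psi0 (x, y)).
- move=> g mg bg; rewrite -E4 //; apply: eq_integral => y _.
  rewrite covP; last first.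
    apply/measurable_EFinP; apply: measurable_funM.
      exact: (measurable_fun_pair1 y mg).
    apply: measurableT_comp; first exact: measurable_expR.
    exact: (measurable_fun_pair1 y mpsi0).
  apply: eq_integral => x _.
  by rewrite -EFinM -mulrA (exp_psi0 (x, y)).
Qed.


Lemma L_bnd (z : (TX * TY)%type) : `|ln (h z.1)| <= M.
Proof.
rewrite ler_norml; apply/andP; split.
  rewrite -[X in X <= _]expRK ler_ln ?posrE ?expR_gt0 ?h_gt0 //.
  exact: h_lo.
rewrite -[X in _ <= X]expRK ler_ln ?posrE ?expR_gt0 ?h_gt0 //.
exact: h_hi.
Qed.

Lemma LN_bnd (z : (TX * TY)%type) : `|- ln (h z.1)| <= M.
Proof. by rewrite normrN; exact: L_bnd. Qed.

Lemma mLN : measurable_fun [set: (TX * TY)%type] (fun z => - ln (h z.1)).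
Proof. by apply: measurableT_comp => //; exact: mL. Qed.

Lemma exp_shift (a : R) (x : TX) : expR (a + ln (h x)) = expR a * h x.
Proof. by rewrite expRD lnK // posrE h_gt0. Qed.

Lemma Hrel_shift (pi : probability (TX * TY)%type R) :
  Hrel nu pi = (Hrel P0 pi - \int[pi]_z (ln (h z.1))%:E)%E.
Proof.
have iL := bounded_int pi mL L_bnd.
have fL := integrable_fin_num measurableT iL.
set l := fine (\int[pi]_z (ln (h z.1))%:E).
have El : (\int[pi]_z (ln (h z.1))%:E = l%:E)%E by rewrite fineK.
rewrite El /Hrel.
set S0 := [set (\int[pi]_z (c z)%:E)%E | c in [set c | Fset pi c /\
               forall y : TY, (\int[P0]_x (expR (c (x, y)))%:E = 1)%E]].
set S1 := [set (\int[pi]_z (c z)%:E)%E | c in [set c | Fset pi c /\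
               forall y : TY, (\int[nu]_x (expR (c (x, y)))%:E = 1)%E]].
have SE : S1 = [set (s + l%:E)%E | s in S0].
  apply/seteqP; split.
  - move=> _ [c' [[mc' wc'] adm'] <-].
    pose c := fun z => c' z - ln (h z.1).
    have mc : measurable_fun setT c by apply: measurable_funB => //; exact: mL.
    have [wc _] := shift_wdef mc' mLN LN_bnd wc'.
    have [_ ec] := shift_wdef mc mL L_bnd wc.
    exists (\int[pi]_z (c z)%:E)%E.
      exists c => //; split; first by split.
      move=> y; rewrite covP; last first.
        apply/measurable_EFinP; apply: measurableT_comp; first exact: measurable_expR.
        exact: (measurable_fun_pair1 y mc).
      rewrite -(adm' y); apply: eq_integral => x _.
      by rewrite -EFinM -exp_shift /c subrK.
    rewrite -El -ec; apply: eq_integral => z _.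
    by rewrite /c subrK.
  - move=> _ [_ [c [[mc wc] adm] <-] <-].
    pose c' := fun z => c z + ln (h z.1).
    have mc' : measurable_fun setT c' by apply: measurable_funD => //; exact: mL.
    have [wc' ec] := shift_wdef mc mL L_bnd wc.
    exists c'; last by rewrite ec El.
    split; first by split.
    move=> y; rewrite -(adm y) covP; last first.
      apply/measurable_EFinP; apply: measurableT_comp; first exact: measurable_expR.
      exact: (measurable_fun_pair1 y mc).
    apply: eq_integral => x _.
    by rewrite -EFinM /c' exp_shift.
rewrite SE ereal_sup_shift oppeD //.
by rewrite fin_num_adde_defl.
Qed.


Lemma main_res : exists psi : X * Y -> R,
    [/\ continuous psi,
        is_jacobian P0 pi0 (fun z => expR (psi z)) &
        forall pi : probability (borel x0 * borel y0)%type R,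
          (- (\int[pi]_z (psi z)%:E) - Hrel P0 pi
            = - (\int[pi]_z (phi z)%:E) - Hrel nu pi)%E].
Proof.
exists psi0; split; [exact: psi0_cont|exact: jac0|move=> pi].
rewrite Hrel_shift.
have iL := bounded_int pi mL L_bnd.
have fL := integrable_fin_num measurableT iL.
have iP := bounded_int pi mphi HM.
have fP := integrable_fin_num measurableT iP.
have -> : (\int[pi]_z (psi0 z)%:E = \int[pi]_z (phi z)%:E - \int[pi]_z (ln (h z.1))%:E)%E.
  rewrite -integralB_EFin //; apply: eq_integral => z _.
rewrite -(fineK fP) -(fineK fL).
move: (fine _) (fine _) (Hrel P0 pi) => a b [r| |] /=.
- by congr EFin; lra.
- by [].
- by [].
Qed.

End main.

Unset Implicit Arguments.
Set Strict Implicit.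

Theorem mainTheorem10 (R : realType) (X Y : metricType R) (x0 : X) (y0 : Y)
  (cX : compact [set: X]) (cY : compact [set: Y])
  (pi0 : probability (borel x0 * borel y0)%type R)
  (hpos : forall U : set (X * Y), open U -> U !=set0 -> (0 < pi0 U)%E)
  (nu : probability (borel x0) R)
  (hnu : msupport (nu : set X -> \bar R) = [set: X])
  (phi : X * Y -> R) (hphi : continuous phi)
  (hJ : is_jacobian nu pi0 (fun z => expR (phi z))) :
  exists psi0 : X * Y -> R,
    [/\ continuous psi0,
        is_jacobian (xmarg pi0) pi0 (fun z => expR (psi0 z)) &
        forall pi : probability (borel x0 * borel y0)%type R,
          (- (\int[pi]_z (psi0 z)%:E) - Hrel (xmarg pi0) pi
            = - (\int[pi]_z (phi z)%:E) - Hrel nu pi)%E].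
Proof. exact: (main_res cX cY hphi hJ). Qed.
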